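(* Let $p\equiv 1\pmod 4$ be a prime. Then $$\prod_{1\le i<j\le \frac{p-1}{2}}(j^2-i^2)\equiv-\Big(\frac{p-1}{2}\Big)!\pmod p.$$ *)

(* Defs.v *)
From HB Require Import structures.
From mathcomp Require Import all_boot all_order all_algebra.

(* Main.v *)
Require Import Defs.
From HB Require Import structures.
From mathcomp Require Import all_boot all_order all_algebra.
From mathcomp Require Import ring zify.
Import GRing.Theory Num.Theory.
Local Open Scope ring_scope.

Lemma fact_pair (p : nat) (hp : prime p) (k : nat) : (k < p)%N ->
  (k`!%:R * (p.-1 - k)`!%:R : 'F_p) = (-1) ^+ k.+1.
Proof.
have p0 := pchar_Fp_0 hp.
have p1 := prime_gt1 hp.
elim: k => [_|k IH hk].
  rewrite fact0 mul1r subn0 expr1.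
  have := (Wilson p1); rewrite hp => /esym /dvdnP [q hq].
  have : (((p.-1)`! + 1)%:R : 'F_p) = 0 by rewrite addn1 hq natrM p0 mulr0.
  by rewrite natrD => /eqP; rewrite addr_eq0 => /eqP.
have e : (p.-1 - k = (p.-1 - k.+1).+1)%N by lia.
have e2 : ((k.+1)%:R : 'F_p) = - ((p.-1 - k.+1).+1)%:R.
  apply/eqP; rewrite -addr_eq0 -natrD.
  have -> : (k.+1 + (p.-1 - k.+1).+1 = p)%N by lia.
  by rewrite p0.
have := IH (ltnW hk); rewrite e factS natrM => IH'.
rewrite factS natrM e2 exprS -IH'.
ring.
Qed.
Lemma inner_prod (j : nat) :
  ((\prod_(1 <= i < j.+1) ((j.+1) ^ 2 - i ^ 2)) * j.+1 = (j.*2.+1)`!)%N.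
Proof.
rewrite (eq_big_nat _ _ (F2 := fun i => (j.+1 - i) * (j.+1 + i))%N);
  last by move=> i _; rewrite subn_sqr.
rewrite big_split /=.
have h1 : (\prod_(1 <= i < j.+1) (j.+1 - i) = j`!)%N.
  rewrite big_nat_rev fact_prod; apply: eq_big_nat => i /andP [h1 h2].
  lia.
have h2 : (\prod_(1 <= i < j.+1) (j.+1 + i) = \prod_(j.+2 <= k < j.*2.+2) k)%N.
  have -> : (j.+2 = 1 + j.+1)%N by lia.
  rewrite big_addn.
  have -> : (j.*2.+2 - j.+1 = j.+1)%N by lia.
  by apply: eq_bigr => i _; rewrite addnC.
rewrite h1 h2 mulnAC [(j`! * _)%N]mulnC -factS [in RHS]fact_prod [in X in (X * _)%N]fact_prod.
rewrite -big_cat_nat //; lia.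
Qed.

Theorem lemma2p1 (p : nat) (hp : prime p) (hp4 : p = 1 %[mod 4]) :
  ((\prod_(1 <= j < (p.-1./2).+1) \prod_(1 <= i < j)
      ((j ^ 2)%:Z - (i ^ 2)%:Z))
   = - ((p.-1./2)`!)%:Z %[mod p])%Z.
Proof.
set n := p.-1./2.
have [m hm] : exists m, p = (m * 4 + 1)%N.
  exists (p %/ 4)%N; rewrite {1}(divn_eq p 4) hp4 //.
have hn : n = m.*2.
  rewrite /n hm; have -> : ((m * 4 + 1).-1 = (m.*2).*2)%N by lia.
  exact: half_double.
set Nn := (\prod_(1 <= j < n.+1) \prod_(1 <= i < j) (j ^ 2 - i ^ 2))%N.
have hP : (\prod_(1 <= j < n.+1) \prod_(1 <= i < j)
      ((j ^ 2)%:Z - (i ^ 2)%:Z))%R = Nn%:Z.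
  rewrite /Nn (big_morph Posz PoszM (erefl _)); apply: eq_big_nat => j _.
  rewrite (big_morph Posz PoszM (erefl _)); apply: eq_big_nat => i /andP [_ hij].
  rewrite subzn // leq_exp2r //; exact: ltnW.
rewrite hP; apply/eqP; rewrite eqz_mod_dvd opprK -PoszD dvdzE /=.
suffices H : ((Nn + n`!)%:R : 'F_p) = 0.
  by rewrite /dvdn -(val_Fp_nat hp) H.
set x := ((n`!)%:R : 'F_p).
have hS2 : (Nn * n`! = \prod_(0 <= j < n) (j.*2.+1)`!)%N.
  rewrite /Nn big_add1 /= fact_prod big_add1 /=.
  rewrite -(big_split muln) /=.
  by apply: eq_bigr => j _; exact: inner_prod.
have hS3n : (\prod_(0 <= j < n) (j.*2.+1)`! =
    \prod_(0 <= i < m) (((m - i.+1).*2.+1)`! * ((i + m).*2.+1)`!))%N.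
  rewrite hn -addnn (big_cat_nat _ (n:=m)) ?leq_addr //.
  rewrite -{2}[m]add0n big_addn addnK big_nat_rev add0n.
  by rewrite [RHS]big_split.
have hS3 : ((\prod_(0 <= j < n) (j.*2.+1)`!)%:R : 'F_p) = 1.
  rewrite hS3n natr_prod big_nat_cond; apply: big1 => i /andP [/andP [_ hi] _].
  rewrite natrM.
  have -> : ((i + m).*2.+1 = p.-1 - (m - i.+1).*2.+1)%N by rewrite hm; lia.
  rewrite (@fact_pair _ hp); last by rewrite hm; lia.
  have -> : ((m - i.+1).*2.+2 = 2 * (m - i))%N by lia.
  rewrite exprM sqrrN !expr1n.
  by [].
have hx : x * x = -1.
  rewrite /x.
  have e : (n = p.-1 - n)%N by rewrite hm hn; lia.
  rewrite {2}e (@fact_pair _ hp); last by rewrite hm hn; lia.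
  by rewrite hn -mul2n exprS exprM sqrrN !expr1n mulr1.
have h1 : (Nn%:R : 'F_p) * x = 1 by rewrite /x -natrM hS2 hS3.
rewrite natrD -/x.
transitivity ((Nn%:R : 'F_p) + x * (Nn%:R * x)); first by rewrite h1 mulr1.
by rewrite mulrCA hx mulrN1 subrr.
Qed.
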